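(* Let $\Gamma$ be a numerical semigroup with multiplicity $e$ and conductor $c$, let $r>0$ be an integer and $m\in\Gamma$. Let $S_r(m)=\{(m_1,\dots,m_r)\in\Gamma^r: m\le m_1<\cdots<m_r\}$. Set $u=\max\{m+e-1,c+e-1\}$ and define finite sets $F_k(m)\subseteq S_k(m)$ recursively by $F_1(m)=\{m,m+1,\dots,u\}\cap\Gamma$ and, for $k\ge2$, \[ F_k(m)=\{(m_1,\dots,m_k): (m_1,\dots,m_{k-1})\in F_{k-1}(m),\ m_k\in X(m;m_1,\dots,m_{k-1})\}, \] where \[ X(m;m_1,\dots,m_{k-1})=\Big(\big(\{m_{k-1}+1,\dots,u\}\cap\Gamma\big)\cup\{m_1+e,\dots,m_{k-1}+e\}\Big)\setminus\{0,1,\dots,m_{k-1}\}. \] Then \[ \min\{|D_\Gamma(x_1,\dots,x_r)| : (x_1,\dots,x_r)\in F_r(m)\}=\min\{|D_\Gamma(p_1,\dots,p_r)|:(p_1,\dots,p_r)\in S_r(m)\}. \] In particular the right-hand side, which is the $r$-th Feng-Rao distance $\delta^r_\Gamma(m)$, is a minimum over a finite, recursively constructible set.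
   Context: A numerical semigroup is a subset $\Gamma\subseteq\mathbb N$ containing $0$, closed under addition, with finite complement; multiplicity = least positive element; conductor = least $c$ with $c+\mathbb N\subseteq\Gamma$. For $x\in\mathbb Z$, $D_\Gamma(x)=\{s\in\Gamma:x-s\in\Gamma\}$ and $D_\Gamma(x_1,\dots,x_r)=D_\Gamma(x_1)\cup\cdots\cup D_\Gamma(x_r)$. The $r$-th Feng-Rao distance is $\delta^r_\Gamma(m)=\min\{|D_\Gamma(m_1,\dots,m_r)|: m\le m_1<\cdots<m_r,\ m_i\in\Gamma\}$. *)

(* Defs.v *)
From mathcomp Require Import all_boot.
Set Implicit Arguments. Unset Strict Implicit. Unset Printing Implicit Defensive.

Definition numerical_semigroup (G : nat -> bool) : Prop :=
  G 0 /\ (forall x y, G x -> G y -> G (x + y)) /\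
  (exists N, forall n, N <= n -> G n).

Definition is_multiplicity (G : nat -> bool) (e : nat) : Prop :=
  0 < e /\ G e /\ (forall x, 0 < x -> G x -> e <= x).

Definition is_conductor (G : nat -> bool) (c : nat) : Prop :=
  (forall n, c <= n -> G n) /\
  (forall c', (forall n, c' <= n -> G n) -> c <= c').

(* D_Gamma(x) = { s in Gamma : x - s in Gamma } (for x in N; s <= x forced) *)
Definition Dset (G : nat -> bool) (x : nat) : seq nat :=
  [seq s <- iota 0 x.+1 | G s && G (x - s)].

Definition Dcard (G : nat -> bool) (xs : seq nat) : nat :=
  size (undup (flatten (map (Dset G) xs))).

Definition inS (G : nat -> bool) (r m : nat) (p : seq nat) : Prop :=
  [/\ size p = r, all G p, sorted ltn p & m <= head 0 p].

Definition ubound (m e c : nat) : nat := maxn (m + e - 1) (c + e - 1).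

Definition F1 (G : nat -> bool) (e c m : nat) : seq (seq nat) :=
  [seq [:: x] | x <- iota m (ubound m e c - m).+1 & G x].

Definition Xset (G : nat -> bool) (e c m : nat) (t : seq nat) : seq nat :=
  let l := last 0 t in
  let u := ubound m e c in
  [seq y <- undup ([seq y <- iota l.+1 (u - l) | G y] ++ [seq y + e | y <- t])
     | l < y].

(* F_k(m) for k >= 1 (F_0 is unused and set to the empty list) *)
Fixpoint Fset (G : nat -> bool) (e c m k : nat) : seq (seq nat) :=
  match k with
  | 0 => [::]
  | k'.+1 =>
      match k' with
      | 0 => F1 G e c m
      | _.+1 => flatten [seq [seq rcons t y | y <- Xset G e c m t]
                        | t <- Fset G e c m k']
      end
  end.

Definition is_FR_distance (G : nat -> bool) (r m d : nat) : Prop :=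
  (exists p, inS G r m p /\ Dcard G p = d) /\
  (forall p, inS G r m p -> d <= Dcard G p).

(* Main.v *)
Require Import Defs.
From mathcomp Require Import all_boot.
From mathcomp Require Import zify.
Set Implicit Arguments. Unset Strict Implicit. Unset Printing Implicit Defensive.

Section Aux.
Variables (G : nat -> bool) (e c m : nat).
Hypothesis G0 : G 0.
Hypothesis GD : forall x y, G x -> G y -> G (x + y).
Hypothesis He : 0 < e.
Hypothesis Ge : G e.
Hypothesis Hc : forall n, c <= n -> G n.

Let u := ubound m e c.

Lemma u_ge : m + e - 1 <= u /\ c + e - 1 <= u.
Proof. rewrite /u /ubound; lia. Qed.

Definition Dsub X Y := {subset flatten (map (Dset G) X) <= flatten (map (Dset G) Y)}.

Lemma Dcard_sub X Y : Dsub X Y -> Dcard G X <= Dcard G Y.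
Proof.
move=> H; rewrite /Dcard; apply: uniq_leq_size; first exact: undup_uniq.
by move=> z; rewrite !mem_undup; apply: H.
Qed.

Lemma Dsub_trans X Y Z : Dsub X Y -> Dsub Y Z -> Dsub X Z.
Proof. by move=> h1 h2 z /h1 /h2. Qed.

Lemma mem_Dset y s : (s \in Dset G y) = [&& s <= y, G s & G (y - s)].
Proof.
rewrite mem_filter mem_iota add0n ltnS /=.
by case: (s <= y); case: (G s); case: (G (y - s)).
Qed.

Lemma Dset_mono y : e <= y -> {subset Dset G (y - e) <= Dset G y}.
Proof.
move=> ey s; rewrite !mem_Dset => /and3P[h1 h2 h3]; apply/and3P; split => //.
  lia.
have -> : y - s = (y - e - s) + e by lia.
exact: GD.
Qed.

Definition Inv X := [/\ uniq X, all G X & all (leq m) X].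
Definition good X := all (fun x => (x <= u) || ((x - e) \in X)) X.

Lemma reduce n X : sumn X < n -> Inv X ->
  exists Y, [/\ Inv Y, size Y = size X, good Y & Dsub Y X].
Proof.
elim: n X => [//|n IH] X hs [uX gX mX].
case: (boolP (good X)) => gdX.
  by exists X; split => //.
case/allPn: gdX => x xX; rewrite negb_or -ltnNge => /andP[xu xeX].
have [ue1 ue2] := u_ge.
have pX := perm_to_rem xX.
set X' := (x - e) :: rem x X.
have sX : sumn X = x + sumn (rem x X) by rewrite (perm_sumn pX).
have hs' : sumn X' < n by rewrite /X' /= ; lia.
have IX' : Inv X'.
  split.
  - rewrite /X' cons_uniq rem_uniq // andbT.
    by apply: contra xeX; apply: mem_rem.
  - rewrite /X' /= (Hc (n:=x - e)); last lia.
    by move: gX; rewrite (perm_all _ pX) => /andP[].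
  - rewrite /X' /= (_ : m <= x - e); last lia.
    by move: mX; rewrite (perm_all _ pX) => /andP[].
have [Y [IY sY gY DY]] := IH X' hs' IX'.
exists Y; split => //.
  by rewrite sY /X' /= (perm_size pX).
apply: (Dsub_trans DY) => z /flatten_mapP [w].
rewrite in_cons => /orP[/eqP -> zD|wr zD]; apply/flatten_mapP.
  by exists x => //; apply: Dset_mono => //; lia.
by exists w => //; apply: mem_rem wr.
Qed.

Lemma FsetSS k : Fset G e c m k.+2 =
  flatten [seq [seq rcons t y | y <- Xset G e c m t] | t <- Fset G e c m k.+1].
Proof. by []. Qed.

Lemma good_Fset k X : 0 < k -> size X = k -> pairwise ltn X -> all G X ->
  all (leq m) X -> good X -> X \in Fset G e c m k.
Proof.
have [ue1 ue2] := u_ge.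
elim: k X => [//|k IH] X _.
case: k IH => [|k] IH.
  case: X => [|x [|//]] //= _ _ /andP[gx _] /andP[mx _] /andP[hx _].
  rewrite /F1; apply: map_f; rewrite mem_filter gx mem_iota /=.
  move: hx; rewrite in_cons orbF => /orP[hx|/eqP hx]; lia.
case/lastP: X => [//|t y]; rewrite size_rcons => -[st].
rewrite pairwise_rcons all_rcons all_rcons => /andP[lty pt] /andP[gy gt] /andP[my mt].
rewrite /good all_rcons => /andP[hy ht].
have ltyP : forall z, z \in t -> z < y by move=> z zt; exact: (allP lty).
have gdt : good t.
  apply/allP => z zt; move: (allP ht z zt); rewrite mem_rcons in_cons.
  case/orP => [->//|/orP[/eqP h|->]]; last by rewrite orbT.
  have := ltyP z zt; lia.
have tF := IH t isT st pt gt mt gdt.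
rewrite FsetSS; apply/flatten_mapP; exists t => //; apply: map_f.
case: t st lty pt gt mt ht ltyP gdt tF hy => [//|a t'] _ _ _ _ _ _ ltyP _ _ hy.
have la : last 0 (a :: t') \in a :: t' by exact: mem_last.
have ly := ltyP _ la.
rewrite /Xset mem_filter ly mem_undup mem_cat.
case: (leqP y u) => yu.
  apply/orP; left; rewrite mem_filter gy mem_iota /=; move: ly yu; rewrite /u /=; lia.
move: hy; rewrite leqNgt yu orFb mem_rcons in_cons => /orP[/eqP h|h].
- lia.
- apply/orP; right; apply/mapP; exists (y - e) => //; lia.
Qed.

Lemma Fset_good k X : 0 < k -> X \in Fset G e c m k ->
  [/\ size X = k, pairwise ltn X, all G X & all (leq m) X].
Proof.
elim: k X => [//|k IH] X _.
case: k IH => [|k] IH.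
  rewrite /= /F1 => /mapP [x]; rewrite mem_filter mem_iota => /andP[gx /andP[mx _]] ->.
  by rewrite /= gx mx.
rewrite FsetSS => /flatten_mapP [t tF /mapP [y yX ->]].
have [st pt gt mt] := IH t isT tF.
case: t st pt gt mt tF yX => [//|a t'] st pt gt mt tF yX.
have la : last 0 (a :: t') \in a :: t' by exact: mem_last.
move: yX; rewrite /Xset mem_filter mem_undup mem_cat => /andP[ly hy].
split.
- by rewrite size_rcons st.
- rewrite -(@sorted_pairwise _ ltn ltn_trans) /= rcons_path.
  by move: pt; rewrite -(@sorted_pairwise _ ltn ltn_trans) /= => ->; exact: ly.
- rewrite all_rcons gt andbT.
  case/orP: hy => [|/mapP [z zt ->]]; first by rewrite mem_filter => /andP[].
  by apply: GD => //; apply: (allP gt).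
- rewrite all_rcons mt andbT.
  have := allP mt _ la; lia.
Qed.

Lemma sort_good Y : Inv Y -> good Y ->
  [/\ size (sort leq Y) = size Y, pairwise ltn (sort leq Y), all G (sort leq Y),
      all (leq m) (sort leq Y) & good (sort leq Y) /\ Dsub (sort leq Y) Y].
Proof.
move=> [uY gY mY] gdY; split.
- by rewrite size_sort.
- by rewrite -(@sorted_pairwise _ ltn ltn_trans) ltn_sorted_uniq_leq sort_uniq uY sort_sorted //; exact: leq_total.
- by rewrite (perm_all _ (permEl (perm_sort leq Y))).
- by rewrite (perm_all _ (permEl (perm_sort leq Y))).
split.
- by apply/allP => x; rewrite !mem_sort => /(allP gdY).
- by move=> z /flatten_mapP [w]; rewrite mem_sort => wY zw; apply/flatten_mapP; exists w.
Qed.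

End Aux.

Lemma seq_argmin (T : eqType) (f : T -> nat) (s : seq T) : s != [::] ->
  exists2 x, x \in s & forall y, y \in s -> f x <= f y.
Proof.
elim: s => [//|a s IH] _.
case: s IH => [|b s] IH.
  by exists a => [|y]; rewrite ?mem_seq1 // => /eqP ->.
have [x xs hx] := IH isT.
case: (leqP (f a) (f x)) => h.
  exists a; first exact: mem_head.
  move=> y; rewrite in_cons => /orP[/eqP ->//|/hx]; exact: leq_trans.
exists x; first by rewrite in_cons xs orbT.
move=> y; rewrite in_cons => /orP[/eqP ->|/hx//]; exact: ltnW.
Qed.

Theorem proposition6p1 (G : nat -> bool) (e c r m : nat) :
  numerical_semigroup G -> is_multiplicity G e -> is_conductor G c ->
  0 < r -> G m ->
  exists x, x \in Fset G e c m r /\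
    (forall y, y \in Fset G e c m r -> Dcard G x <= Dcard G y) /\
    is_FR_distance G r m (Dcard G x).
Proof.
move=> [G0 [GD _]] [He [Ge _]] [Hc _] r0 Gm.
have toF : forall X, Inv G m X -> size X = r ->
    exists2 Y, Y \in Fset G e c m r & Dsub G Y X.
  move=> X IX sX.
  have [Y [IY sY gY DY]] := reduce G0 GD He Ge Hc (ltnSn (sumn X)) IX.
  have [s1 s2 s3 s4 [s5 s6]] := sort_good IY gY.
  exists (sort leq Y); last exact: Dsub_trans s6 DY.
  by apply: good_Fset => //; rewrite s1 sY.
have Gmul : forall i, G (i * e) by elim=> [|i IHi] //; rewrite mulSn; apply: GD.
set P0 := [seq m + i * e | i <- iota 0 r].
have IP0 : Inv G m P0.
  split.
  - rewrite map_inj_uniq ?iota_uniq // => i j /addnI /eqP.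
    by rewrite eqn_mul2r => /orP[/eqP|/eqP //]; lia.
  - by apply/allP => z /mapP [i _ ->]; apply: GD.
  - by apply/allP => z /mapP [i _ ->]; rewrite leq_addr.
have sP0 : size P0 = r by rewrite size_map size_iota.
have [Y0 Y0F _] := toF P0 IP0 sP0.
have ne : Fset G e c m r != [::] by case: (Fset G e c m r) Y0F.
have [x xF hx] := seq_argmin (Dcard G) ne.
have [sx px gx mx] := Fset_good G0 GD He Ge r0 xF.
exists x; split => //; split => //; split.
  exists x; split => //; split => //.
  - by rewrite (@sorted_pairwise _ ltn ltn_trans).
  - case: x {xF hx px gx} sx mx => [|a t] /= => [?|_ /andP[]//]; lia.
move=> p [sp gp srp hp].
have IP : Inv G m p.
  split => //; first exact: (@sorted_uniq _ ltn ltn_trans ltnn).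
  case: p {sp} gp srp hp => [//|a t] /= _ srp hp; rewrite hp /=.
  apply/allP => z zt; have := allP (@order_path_min _ ltn _ _ ltn_trans srp) z zt; lia.
have [Y YF DY] := toF p IP sp.
exact: leq_trans (hx _ YF) (Dcard_sub DY).
Qed.
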